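(* For all integers $n\ge0$ and $k\ge0$, $$\mu(N|_{2n},k,J^{*})\equiv\begin{cases}0\pmod 2,&\text{if }k\text{ is odd},\\ \mu(P|_n,k/2,J^{*})\pmod 2,&\text{if }k\text{ is even}.\end{cases}$$
   Context: Let $N=\{0,1,2,\ldots\}$, $J^{*}=\{(2n+1)2^{2k}-1 : n,k\in N,\ k>0\}=\{3,11,15,19,\ldots\}$, and $P=\{k\in N: k\equiv0,3\pmod 4\}$. For an infinite set $A\subseteq N$, $A|_m$ denotes the set of the $m$ smallest elements of $A$. An involution on a finite set $A$ is a permutation $\sigma$ of $A$ with $\sigma=\sigma^{-1}$; its cycles are fixed points and transpositions $(c,d)$. A transposition $(c,d)$ is said to be in a set $B$ if $c+d\in B$. For a finite set $A\subseteq N$, an integer $k\ge0$ and a set $B\subseteq N$, $\mu(A,k,B)$ denotes the number of involutions of $A$ having exactly $k$ transpositions, all of which are in $B$. *)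

(* Defs.v *)
From mathcomp Require Import all_boot all_fingroup.
Set Implicit Arguments. Unset Strict Implicit. Unset Printing Implicit Defensive.


Definition JstarP (x : nat) : Prop :=
  exists n k : nat, 0 < k /\ x = (2 * n + 1) * 2 ^ (2 * k) - 1.

(* Boolean version: the existentials are bounded (n, k <= x necessarily). *)
Definition Jstar : pred nat := fun x =>
  [exists n : 'I_x.+1, exists k : 'I_x.+1,
     (0 < (k : nat)) && (x == (2 * n + 1) * 2 ^ (2 * k) - 1)].

Lemma JstarP_Jstar x : JstarP x <-> Jstar x.
Proof.
split.
- move=> [n [k [k0 ->]]].
  have pos : 0 < (2 * n + 1) * 2 ^ (2 * k) by rewrite muln_gt0 expn_gt0 addn1.
  have E : 2 * n + 1 <= (2 * n + 1) * 2 ^ (2 * k) by rewrite leq_pmulr // expn_gt0.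
  have E2 : 2 ^ (2 * k) <= (2 * n + 1) * 2 ^ (2 * k) by rewrite leq_pmull // addn1.
  have H1 : n < ((2 * n + 1) * 2 ^ (2 * k) - 1).+1.
    rewrite subn1 prednK //; apply: leq_trans E; rewrite addn1 ltnS.
    by rewrite leq_pmull.
  have H2 : k < ((2 * n + 1) * 2 ^ (2 * k) - 1).+1.
    rewrite subn1 prednK //; apply: leq_trans E2.
    apply: (leq_trans _ (ltn_expl (2 * k) (isT : 1 < 2))).
    by rewrite ltnS leq_pmull.
  by apply/existsP; exists (Ordinal H1); apply/existsP; exists (Ordinal H2);
    rewrite /= k0 eqxx.
- move=> /existsP [n /existsP [k /andP [k0 /eqP ->]]].
  by exists n, k.
Qed.

Definition Pset : pred nat := fun k => (k %% 4 == 0) || (k %% 4 == 3).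
Definition Nset : pred nat := predT.

(* A|_m : the m smallest elements of A, listed increasingly.  We search
   below 4m, which suffices for every A having at least m elements in
   [0, 4m); this holds for A = N and A = P. *)
Definition first_m (A : pred nat) (m : nat) : seq nat :=
  take m [seq i <- iota 0 (4 * m) | A i].

(* An involution of A is represented as a permutation of 'I_M (M a bound for
   A) supported in A and squaring to the identity; its transpositions (c,d)
   correspond bijectively to the points c with c < s c. *)
Definition mu (A : seq nat) (k : nat) (B : pred nat) : nat :=
  let M := (\max_(a <- A) a).+1 in
  let S := [set i : 'I_M | val i \in A] in
  #|[set s : {perm 'I_M} |
      [&& perm_on S s, (s * s)%g == 1%g,
          #|[set x : 'I_M | x < s x]| == k &
          [forall x : 'I_M, (x < s x) ==> B (val x + val (s x))]]]|.

(* Main.v *)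
Require Import Defs.
From mathcomp Require Import all_boot all_fingroup zify.
Set Implicit Arguments. Unset Strict Implicit. Unset Printing Implicit Defensive.

Lemma Jstar_mod4 x : Jstar x -> x %% 4 = 3.
Proof.
move/JstarP_Jstar=> [n [k [k0 ->]]].
case: k k0 => // k _.
have -> : 2 ^ (2 * k.+1) = 4 * 4 ^ k by rewrite mulnS expnD expnM.
set t := 4 ^ k. have : 0 < t by rewrite expn_gt0.
lia.
Qed.

Lemma inv_parity (T : finType) (f : T -> T) (A : {set T}) :
  involutive f -> (forall x, x \in A -> f x \in A) ->
  #|A| = #|[set x in A | f x == x]| %[mod 2].
Proof.
move=> finv.
elim: {A}_.+1 {-2}A (ltnSn #|A|) => // m IH A Hm fA.
case: (pickP [pred x in A | f x != x]) => [x /andP[xA fx] | H].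
- set A' := A :\ x :\ f x.
  have fxA : f x \in A :\ x by rewrite !inE fA // andbT; apply: contra fx => /eqP ->.
  have cA : #|A| = #|A'|.+2.
    by rewrite (cardsD1 x A) xA (cardsD1 (f x) (A :\ x)) fxA.
  have eqF : [set y in A' | f y == y] = [set y in A | f y == y].
    apply/setP=> y; rewrite !inE; case fy: (f y == y); rewrite ?andbF ?andbT //.
    move/eqP: fy => fy.
    case yx: (y == x); first by move/eqP: yx fy => -> /eqP; rewrite (negbTE fx).
    case yfx: (y == f x) => //=.
    move/eqP: yfx fy => -> fy; have E : x = f x by rewrite -{1}(finv x) fy.
    by move: fx; rewrite -E eqxx.
  rewrite -eqF cA -addn2 modnDr; apply: IH.
    by move: Hm; rewrite cA; lia.
  move=> y; rewrite !inE => /and3P[yfx yx yA].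
  rewrite fA // andbT; apply/andP; split.
    by apply: contra yx => /eqP/(congr1 f); rewrite !finv => ->.
  by apply: contra yfx => /eqP/(congr1 f); rewrite finv => ->.
- congr (_ %% _); apply: eq_card => y; rewrite !inE.
  by case yA: (y \in A) => //=; move: (H y); rewrite /= yA /= => /negbFE ->.
Qed.


Definition mu' (L k : nat) (R : nat -> nat -> bool) : nat :=
  #|[set s : {perm 'I_L} | [&& (s * s)%g == 1%g,
       #|[set x : 'I_L | x < s x]| == k &
       [forall x : 'I_L, (x < s x) ==> R (val x) (val (s x))]]]|.

Definition pn L (s : {perm 'I_L}) (i : nat) : nat :=
  if insub i is Some j then val (s j) else i.

Lemma pnE L (s : {perm 'I_L}) (i : 'I_L) : pn s i = s i.
Proof. by rewrite /pn valK. Qed.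

Lemma relabel (a : nat -> nat) (L k : nat) (B : pred nat) :
  {mono a : i j / i < j} ->
  mu (map a (iota 0 L)) k B = mu' L k (fun i j => B (a i + a j)).
Proof.
move=> amono.
have ainj : injective a.
  move=> i j aij; have h1 := amono i j; have h2 := amono j i.
  rewrite aij ltnn in h1 h2; lia.
rewrite /mu /=.
set A := map a (iota 0 L).
set m := \max_(_ <- A) _.
have aM : forall i, i < L -> a i < m.+1.
  move=> i iL; rewrite ltnS; apply: (leq_bigmax_seq (F := id)) => //.
  by apply: map_f; rewrite mem_iota.
have idxA : forall i, i < L -> index (a i) A = i.
  move=> i iL; rewrite index_map //.
  have := @index_uniq _ 0 i (iota 0 L); rewrite size_iota nth_iota // add0n.
  by move=> -> //; apply: iota_uniq.
have memA : forall y, y \in A -> exists2 i, i < L & y = a i.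
  by move=> y /mapP [i]; rewrite mem_iota add0n => /andP[_ iL] ->; exists i.
have idxL : forall y, y \in A -> index y A < L.
  by move=> y /memA [i iL ->]; rewrite idxA.
have aidx : forall y, y \in A -> a (index y A) = y.
  by move=> y /memA [i iL ->]; rewrite idxA.
pose emb (i : 'I_L) : 'I_m.+1 := inord (a i).
have embE : forall i, val (emb i) = a i by move=> i; rewrite /emb /= inordK ?aM.
have emb_inj : injective emb.
  by move=> i j /(congr1 val); rewrite !embE => /ainj /val_inj.
have embA : forall i, val (emb i) \in A.
  by move=> i; rewrite embE; apply: map_f; rewrite mem_iota /=.
have embP : forall x : 'I_m.+1, val x \in A -> exists i, x = emb i.
  move=> x xA; exists (Ordinal (idxL _ xA)); apply: val_inj.
  by rewrite embE /= aidx.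
pose liftf (s : {perm 'I_L}) (x : 'I_m.+1) : 'I_m.+1 :=
  if val x \in A then inord (a (pn s (index (val x) A))) else x.
have liftfE : forall s i, liftf s (emb i) = emb (s i).
  by move=> s i; rewrite /liftf embA embE idxA // pnE.
have liftfN : forall s x, val x \notin A -> liftf s x = x.
  by move=> s x /negbTE xA; rewrite /liftf xA.
have liftf_inj : forall s, injective (liftf s).
  move=> s x y.
  case xA: (val x \in A); case yA: (val y \in A).
  - have [i ->] := embP x xA; have [j ->] := embP y yA.
    by rewrite !liftfE => /emb_inj /perm_inj ->.
  - have [i ->] := embP x xA; rewrite liftfE (liftfN s y) ?yA // => E.
    by move: yA; rewrite -E embA.
  - have [j ->] := embP y yA; rewrite liftfE (liftfN s x) ?xA // => E.
    by move: xA; rewrite E embA.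
  - by rewrite !liftfN ?xA ?yA.
pose lift s := perm (liftf_inj s).
have liftE : forall s i, lift s (emb i) = emb (s i).
  by move=> s i; rewrite permE liftfE.
have liftN : forall s x, val x \notin A -> lift s x = x.
  by move=> s x xA; rewrite permE liftfN.
have lift_inj : injective lift.
  move=> s t E; apply/permP => i; apply: emb_inj.
  by rewrite -!liftE E.
have liftM : forall s t, lift (s * t)%g = (lift s * lift t)%g.
  move=> s t; apply/permP => x; rewrite permM.
  case xA: (val x \in A).
    by have [i ->] := embP x xA; rewrite !liftE permM.
  by rewrite !liftN ?xA.
have lift1 : lift 1%g = 1%g.
  apply/permP => x; rewrite perm1.
  case xA: (val x \in A).
    by have [i ->] := embP x xA; rewrite !liftE perm1.
  by rewrite !liftN ?xA.
pose S := [set i : 'I_m.+1 | val i \in A].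
have liftX : forall s,
  (lift s \in [set s0 : {perm 'I_m.+1} | [&& perm_on S s0, (s0 * s0)%g == 1%g,
          #|[set x : 'I_m.+1 | x < s0 x]| == k &
          [forall x : 'I_m.+1, (x < s0 x) ==> B (val x + val (s0 x))]]]) =
  (s \in [set s0 : {perm 'I_L} | [&& (s0 * s0)%g == 1%g,
       #|[set x : 'I_L | x < s0 x]| == k &
       [forall x : 'I_L, (x < s0 x) ==> B (a (val x) + a (val (s0 x)))]]]).
  move=> s; rewrite !inE.
  have -> : perm_on S (lift s).
    apply/subsetP => x; rewrite !inE; apply: contraR => xA.
    by rewrite liftN.
  have -> : ((lift s * lift s)%g == 1%g) = ((s * s)%g == 1%g).
    by rewrite -liftM -lift1 (inj_eq lift_inj).
  have -> : [set x : 'I_m.+1 | x < lift s x] = emb @: [set x : 'I_L | x < s x].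
    apply/setP => x; rewrite inE.
    case xA: (val x \in A).
      have [i ->] := embP x xA; rewrite liftE.
      apply/idP/imsetP.
        by rewrite !embE amono => lt; exists i; rewrite // inE.
      by move=> [j]; rewrite inE => lt /emb_inj ->; rewrite !embE amono.
    rewrite liftN ?xA // ltnn; apply/esym/negbTE/imsetP => [[j _ E]].
    by move: xA; rewrite E embA.
  rewrite card_imset //.
  congr [&& true, _, _ & _].
  apply/forallP/forallP.
    move=> H i; have := H (emb i); rewrite liftE !embE amono.
    by [].
  move=> H x; case xA: (val x \in A).
    have [i ->] := embP x xA; rewrite liftE !embE amono.
    exact: H i.
  by rewrite liftN ?xA // ltnn.
set X := [set s0 : {perm 'I_m.+1} | _].
have -> : X = lift @: [set s0 : {perm 'I_L} | [&& (s0 * s0)%g == 1%g,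
       #|[set x : 'I_L | x < s0 x]| == k &
       [forall x : 'I_L, (x < s0 x) ==> B (a (val x) + a (val (s0 x)))]]].
  apply/setP => s; apply/idP/imsetP; last by move=> [t tY ->]; rewrite liftX.
  move=> sX.
  have sS : perm_on S s by move: sX; rewrite inE => /andP[].
  have sA : forall i, val (s (emb i)) \in A.
    by move=> i; have := perm_closed (emb i) sS; rewrite !inE embA.
  pose g (i : 'I_L) : 'I_L := Ordinal (idxL _ (sA i)).
  have gE : forall i, emb (g i) = s (emb i).
    by move=> i; apply: val_inj; rewrite embE; exact: aidx (sA i).
  have ginj : injective g.
    by move=> i j /(congr1 emb); rewrite !gE => /perm_inj /emb_inj.
  have sE : s = lift (perm ginj).
    apply/permP => x; case xA: (val x \in A).
      by have [i ->] := embP x xA; rewrite liftE permE gE.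
    rewrite liftN ?xA //; apply: (out_perm sS); by rewrite inE xA.
  by exists (perm ginj); rewrite // -liftX -sE.
by rewrite card_imset.
Qed.


Definition pP (i : nat) : nat := i %/ 2 * 4 + i %% 2 * 3.

Lemma firstN n : first_m Nset (2 * n) = map (fun i => i) (iota 0 (2 * n)).
Proof.
rewrite map_id_in // /first_m /Nset filter_predT take_iota.
by congr iota; apply/minn_idPl; lia.
Qed.

Lemma filterP_iota n :
  [seq i <- iota 0 (4 * n) | Pset i] = map pP (iota 0 (2 * n)).
Proof.
elim: n => [|n IH]; first by rewrite muln0.
rewrite !mulnSr iotaD iotaD filter_cat map_cat IH; congr (_ ++ _).
rewrite /= /Pset /pP !add0n.
have e0 : (4 * n) %% 4 = 0 by rewrite mulnC modnMl.
have e1 : (4 * n).+1 %% 4 = 1 by rewrite -addn1 mulnC modnMDl.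
have e2 : (4 * n).+2 %% 4 = 2 by rewrite -addn2 mulnC modnMDl.
have e3 : (4 * n).+3 %% 4 = 3 by rewrite -addn3 mulnC modnMDl.
rewrite e0 e1 e2 e3 /=.
have f0 : 2 * n %/ 2 * 4 + 2 * n %% 2 * 3 = 4 * n.
  by rewrite mulKn // [2 * n]mulnC modnMl mul0n addn0 mulnC.
have f1 : (2 * n).+1 %/ 2 * 4 + (2 * n).+1 %% 2 * 3 = (4 * n).+3.
  rewrite -addn1 [2 * n]mulnC divnMDl // modnMDl /= divn_small // addn0 modn_small //.
  by rewrite mul1n mulnC addn3.
by rewrite f0 f1.
Qed.

Lemma firstP n : first_m Pset n = map pP (iota 0 n).
Proof.
rewrite /first_m filterP_iota -map_take take_iota.
by congr (map _ (iota _ _)); apply/minn_idPl; lia.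
Qed.

Lemma pP_mono : {mono pP : i j / i < j}.
Proof. move=> i j; rewrite /pP; apply/idP/idP; lia. Qed.

Lemma id_mono : {mono (fun i : nat => i) : i j / i < j}.
Proof. by []. Qed.


Definition tf (x : nat) : nat := x %/ 2 * 2 + (1 - x %% 2).

Lemma tf_lt n (x : 'I_(2 * n)) : tf x < 2 * n.
Proof. have := ltn_ord x; rewrite /tf; lia. Qed.

Definition tauf n (x : 'I_(2 * n)) : 'I_(2 * n) := Ordinal (tf_lt x).

Lemma tauf_inv n : involutive (@tauf n).
Proof. move=> x; apply: val_inj => /=; rewrite /tf; lia. Qed.

Definition tau n : {perm 'I_(2 * n)} := perm (can_inj (@tauf_inv n)).

Lemma tauE n x : val (tau n x) = tf x.
Proof. by rewrite permE. Qed.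

Lemma tauK n x : tau n (tau n x) = x.
Proof. by rewrite !permE tauf_inv. Qed.

Lemma hlf_lt n (x : 'I_(2 * n)) : x %/ 2 < n.
Proof. have := ltn_ord x; lia. Qed.

Definition hlf n (x : 'I_(2 * n)) : 'I_n := Ordinal (hlf_lt x).

Lemma emb2_lt n (i : 'I_n) (b : bool) : i * 2 + b < 2 * n.
Proof. have := ltn_ord i; case: b; lia. Qed.

Definition emb2 n (p : 'I_n * bool) : 'I_(2 * n) := Ordinal (emb2_lt p.1 p.2).

Lemma emb2_inj n : injective (@emb2 n).
Proof.
move=> [i b] [j c] /(congr1 val) /= E.
have : i = j :> nat by case: b c E => [] []; lia.
move/val_inj => eij; subst j; congr (_, _); case: b c E => [] []; lia.
Qed.

Lemma card_hlf n (A : {set 'I_n}) : #|(@hlf n) @^-1: A| = #|A| * 2.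
Proof.
have -> : (@hlf n) @^-1: A = (@emb2 n) @: setX A [set: bool].
  apply/setP => x; rewrite inE; apply/idP/imsetP.
    move=> hA; exists (hlf x, odd x); first by rewrite inE hA inE.
    by apply: val_inj => /=; rewrite -modn2; lia.
  move=> [[i b]]; rewrite inE /= => /andP[iA _] ->.
  suff -> : hlf (emb2 (i, b)) = i by [].
  by apply: val_inj => /=; case: b; lia.
by rewrite card_imset ?cardsX ?cardsT ?card_bool //; apply: emb2_inj.
Qed.


Definition Xset L k (R : nat -> nat -> bool) := [set s : {perm 'I_L} | [&& (s * s)%g == 1%g,
       #|[set x : 'I_L | x < s x]| == k &
       [forall x : 'I_L, (x < s x) ==> R (val x) (val (s x))]]].

Lemma ssE L (s : {perm 'I_L}) : (s * s)%g == 1%g -> forall y, s (s y) = y.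
Proof. by move/eqP => E y; rewrite -permM E perm1. Qed.

Definition JN := fun i j => Jstar (i + j).

Lemma Kl L k (s : {perm 'I_L}) : s \in Xset L k JN ->
  forall y, s y != y -> Jstar (y + s y).
Proof.
rewrite inE => /and3P[ss _ /forallP H] y sy.
case: (ltngtP y (s y)) => [lt|gt|eq].
- by have := H y; rewrite lt.
- have := H (s y); rewrite ssE // gt /= /JN addnC; exact.
- by move: sy; rewrite -(val_inj eq) eqxx.
Qed.

Lemma tf_add y z : (y + z) %% 4 = 3 -> tf y + tf z = y + z.
Proof. rewrite /tf; lia. Qed.

Lemma tf_lt2 y z : (y + z) %% 4 = 3 -> (tf y < tf z) = (y < z).
Proof. rewrite /tf => H; apply/idP/idP; lia. Qed.

Definition cj n (s : {perm 'I_(2 * n)}) := (tau n * s * tau n)%g.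

Lemma cjE n s x : @cj n s x = tau n (s (tau n x)).
Proof. by rewrite /cj !permM. Qed.

Lemma cj_inv n : involutive (@cj n).
Proof. by move=> s; apply/permP => x; rewrite !cjE !tauK. Qed.

Lemma cjX n k s : s \in Xset (2 * n) k JN -> cj s \in Xset (2 * n) k JN.
Proof.
move=> sX; have K := Kl sX.
move: (sX); rewrite !inE => /and3P[ss /eqP cnt _].
have ss' := ssE ss.
have ord : forall y : 'I_(2 * n), (tau n y < tau n (s y)) = (y < s y).
  move=> y; case: (eqVneq (s y) y) => [->|sy]; first by rewrite !ltnn.
  by rewrite !tauE tf_lt2 // Jstar_mod4 // K.
apply/and3P; split.
- apply/eqP/permP => x; rewrite permM !cjE tauK ss' tauK perm1 //.
- have -> : [set x : 'I_(2 * n) | x < cj s x] = tau n @^-1: [set y : 'I_(2 * n) | y < s y].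
    apply/setP => x; rewrite !inE cjE -ord tauK //.
  by rewrite card_preimset ?cnt //; apply: perm_inj.
- apply/forallP => x; rewrite cjE; apply/implyP.
  rewrite -{1}(tauK x) ord => lt.
  have sy : s (tau n x) != tau n x by apply: contraTneq lt => ->; rewrite ltnn.
  have Ky := K _ sy.
  have E : (x : nat) = tf (tau n x) by rewrite -tauE tauK.
  have E2 : (tau n (s (tau n x)) : nat) = tf (s (tau n x)) by rewrite tauE.
  by rewrite /JN /= E2 E tf_add ?Jstar_mod4.
Qed.


Definition l2v n (s : {perm 'I_n}) (x : 'I_(2 * n)) : nat :=
  s (hlf x) * 2 + (if s (hlf x) == hlf x then x %% 2 else 1 - x %% 2).

Lemma l2v_div n s x : @l2v n s x %/ 2 = s (hlf x).
Proof. rewrite /l2v; case: eqP => _; lia. Qed.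

Lemma l2v_mod n s x : @l2v n s x %% 2 =
   (if s (hlf x) == hlf x then x %% 2 else 1 - x %% 2).
Proof. rewrite /l2v; case: eqP => _; lia. Qed.

Lemma l2_lt n s x : @l2v n s x < 2 * n.
Proof. have := ltn_ord (s (hlf x)); rewrite /l2v; case: eqP => _; lia. Qed.

Definition l2f n s x : 'I_(2 * n) := Ordinal (@l2_lt n s x).

Lemma l2_inj n s : injective (@l2f n s).
Proof.
move=> x y /(congr1 val) /= E.
have hs : s (hlf x) = s (hlf y) by apply: val_inj => /=; rewrite -!l2v_div E.
have h : hlf x = hlf y by apply: perm_inj hs.
have hd : x %/ 2 = y %/ 2 by have := congr1 val h.
have hm := congr1 (fun v => v %% 2) E; rewrite /= !l2v_mod hs h in hm.
apply: val_inj => /=; move: hm; case: eqP => _; lia.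
Qed.

Definition lift2 n s : {perm 'I_(2 * n)} := perm (@l2_inj n s).

Lemma lift2E n s x : val (@lift2 n s x) = l2v s x.
Proof. by rewrite permE. Qed.

Lemma hlf_lift2 n s x : hlf (@lift2 n s x) = s (hlf x).
Proof. by apply: val_inj; rewrite /= lift2E l2v_div. Qed.

Lemma lift2_inj n : injective (@lift2 n).
Proof.
move=> s t E; apply/permP => i.
have := congr1 (fun u : {perm _} => hlf (u (emb2 (i, false)))) E.
rewrite /= !hlf_lift2.
suff -> : hlf (emb2 (i, false)) = i by [].
by apply: val_inj => /=; lia.
Qed.

Lemma lift2_cj n s : cj (@lift2 n s) = lift2 s.
Proof.
apply/permP => x; rewrite cjE; apply: val_inj.
have hx : hlf (tau n x) = hlf x by apply: val_inj; rewrite /= tauE /tf; lia.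
rewrite tauE !lift2E /l2v hx !tauE /tf.
case: eqP => _; lia.
Qed.

Lemma Jp i j : Jstar (pP i + pP j) = Jstar ((i + j) * 2 + 1).
Proof.
case: (eqVneq (i %% 2) (j %% 2)) => [e|ne].
  apply/idP/idP => /Jstar_mod4; rewrite /pP; lia.
suff -> : pP i + pP j = (i + j) * 2 + 1 by [].
move: ne; rewrite /pP; lia.
Qed.


Definition JP := fun i j => Jstar (pP i + pP j).

Lemma hlfv n (x : 'I_(2 * n)) : (hlf x : nat) = x %/ 2.
Proof. by []. Qed.

Lemma lift2_X n k s :
  (@lift2 n s \in Xset (2 * n) k JN) =
  [&& (s * s)%g == 1%g, #|[set i : 'I_n | i < s i]| * 2 == k &
      [forall i : 'I_n, (i < s i) ==> JP (val i) (val (s i))]].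
Proof.
rewrite inE.
have -> : ((lift2 s * lift2 s)%g == 1%g) = ((s * s)%g == 1%g).
  apply/eqP/eqP => E.
    apply/permP => i; rewrite permM perm1.
    have := congr1 (fun u : {perm _} => hlf (u (emb2 (i, false)))) E.
    rewrite /= permM !hlf_lift2 perm1.
    suff -> : hlf (emb2 (i, false)) = i by [].
    by apply: val_inj => /=; lia.
  have ss := ssE (introT eqP E).
  apply/permP => x; rewrite permM perm1; apply: val_inj.
  rewrite lift2E /l2v hlf_lift2 ss lift2E /l2v.
  case: (eqVneq (s (hlf x)) (hlf x)) => [e|ne].
    rewrite e /= ?hlfv; lia.
  rewrite /= ?hlfv; lia.
have -> : [set x : 'I_(2 * n) | x < lift2 s x] = (@hlf n) @^-1: [set i : 'I_n | i < s i].
  apply/setP => x; rewrite !inE lift2E /l2v.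
  case: (eqVneq (s (hlf x)) (hlf x)) => [e|ne].
    rewrite e ltnn /=; apply/negbTE; lia.
  have ne' : (s (hlf x) : nat) <> hlf x by move=> /val_inj /eqP; rewrite (negbTE ne).
  apply/idP/idP; rewrite /= in ne' *; lia.
rewrite card_hlf.
congr [&& _, _ & _].
apply/forallP/forallP.
  move=> H i; apply/implyP => lt.
  have hi : hlf (emb2 (i, false)) = i by apply: val_inj => /=; lia.
  have := H (emb2 (i, false)); rewrite !lift2E /l2v hi.
  have ne : s i != i by apply: contraTneq lt => ->; rewrite ltnn.
  rewrite (negbTE ne) /= /JN /JP Jp.
  have ne' : (s i : nat) <> i by move=> /val_inj /eqP; rewrite (negbTE ne).
  have -> : i * 2 + 0 + (s i * 2 + (1 - (i * 2 + 0) %% 2)) = (i + s i) * 2 + 1 by lia.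
  move/implyP; apply; lia.
move=> H x; apply/implyP; rewrite !lift2E /l2v.
case: (eqVneq (s (hlf x)) (hlf x)) => [e|ne].
  rewrite e /= => lt; exfalso; lia.
have ne' : (s (hlf x) : nat) <> hlf x by move=> /val_inj /eqP; rewrite (negbTE ne).
move=> lt.
have lt' : hlf x < s (hlf x) by rewrite ?hlfv in ne' *; lia.
have := H (hlf x); rewrite lt' /= /JP Jp /JN.
have -> : (x + (s (hlf x) * 2 + (1 - x %% 2))) = (hlf x + s (hlf x)) * 2 + 1.
  by rewrite ?hlfv in ne' *; lia.
by [].
Qed.


Lemma hlf_cases n (a b : 'I_(2 * n)) : hlf a = hlf b -> a = b \/ a = tau n b.
Proof.
move/(congr1 val) => /= E.
have : (a : nat) = b \/ (a : nat) = tf b by rewrite /tf; lia.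
by case=> [/val_inj ->|H]; [left | right; apply: val_inj; rewrite tauE].
Qed.

Lemma fix_lift2 n k s : s \in Xset (2 * n) k JN -> cj s = s ->
  exists s', s = @lift2 n s'.
Proof.
move=> sX cs.
have K := Kl sX.
have com : forall x, s (tau n x) = tau n (s x).
  move=> x; have := congr1 (fun u : {perm _} => u x) cs; rewrite cjE => <-.
  by rewrite tauK.
pose e0 (i : 'I_n) := emb2 (i, false).
have e0v : forall i, (e0 i : nat) = i * 2 by move=> i /=; lia.
pose g (i : 'I_n) := hlf (s (e0 i)).
have ginj : injective g.
  move=> i j /hlf_cases [/perm_inj E | E].
    by move: (congr1 val E) => /= h; apply: val_inj => /=; lia.
  move: E; rewrite -com => /perm_inj /(congr1 val); rewrite tauE /tf /=; lia.
exists (perm ginj); apply/permP => x; apply: val_inj.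
rewrite lift2E /l2v permE /g.
have hx : hlf (e0 (hlf x)) = hlf x by apply: val_inj => /=; lia.
set i := hlf x in hx *.
set y := s (e0 i).
have Hy : y = e0 i \/ (e0 i + y) %% 4 = 3.
  case: (eqVneq y (e0 i)) => [->|ne]; first by left.
  by right; apply: Jstar_mod4; apply: K.
have yv : (hlf y : nat) = y %/ 2 by [].
have iv : (i : nat) = x %/ 2 by [].
have [xe|xt] := hlf_cases (esym hx).
  rewrite xe -/y.
  case: (eqVneq (hlf y) i) => [e|ne].
    have e' : y %/ 2 = i by have := congr1 val e.
    case: Hy => [E|H4]; first by rewrite E /= in e' *; lia.
    by rewrite /= in e' H4 *; lia.
  have ne' : y %/ 2 <> i by move=> h; move: ne; rewrite -(inj_eq val_inj) /= h eqxx.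
  case: Hy => [E|H4]; first by rewrite E /= in ne' *; lia.
  by rewrite /= in ne' H4 *; lia.
rewrite xt com tauE -/y /tf.
have hti : hlf (tau n (e0 i)) = i by apply: val_inj; rewrite /= tauE /tf /=; lia.
rewrite tauE.
case: (eqVneq (hlf y) i) => [e|ne].
  have e' : y %/ 2 = i by have := congr1 val e.
  case: Hy => [E|H4]; first by rewrite E ?tauE /tf /= in e' *; lia.
  by rewrite ?tauE /tf /= in e' H4 *; lia.
have ne' : y %/ 2 <> i by move=> h; move: ne; rewrite -(inj_eq val_inj) /= h eqxx.
case: Hy => [E|H4]; first by rewrite E ?tauE /tf /= in ne' *; lia.
by rewrite ?tauE /tf /= in ne' H4 *; lia.
Qed.


Theorem lemma2p3 (n k : nat) :
  mu (first_m Nset (2 * n)) k Jstar =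
  (if odd k then 0 else mu (first_m Pset n) (k./2) Jstar) %[mod 2].
Proof.
rewrite firstN relabel; last exact: id_mono.
rewrite firstP relabel; last exact: pP_mono.
change (#|Xset (2 * n) k JN| =
  (if odd k then 0 else #|Xset n k./2 JP|) %[mod 2]).
rewrite (inv_parity (@cj_inv n) (@cjX n k)).
have -> : [set x in Xset (2 * n) k JN | cj x == x] =
          (@lift2 n) @: [set s' | lift2 s' \in Xset (2 * n) k JN].
  apply/setP => s; apply/idP/imsetP.
    rewrite inE => /andP[sX /eqP cs].
    have [s' E] := fix_lift2 sX cs.
    by exists s'; rewrite // inE -E.
  move=> [s']; rewrite inE => sX ->.
  by rewrite inE sX lift2_cj eqxx.
rewrite card_imset; last exact: lift2_inj.
have E : forall c, (c * 2 == k) = (~~ odd k && (c == k./2)).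
  move=> c; rewrite -divn2; have := modn2 k.
  case: (odd k) => /= h; last by apply/eqP/eqP; lia.
  by apply/negbTE/eqP; lia.
case: ifP => ok.
  suff -> : [set s' | lift2 s' \in Xset (2 * n) k JN] = set0 by rewrite cards0.
  by apply/setP => s; rewrite in_set0 inE lift2_X E ok /= andbF.
congr (_ %% _); apply: eq_card => s.
by rewrite inE lift2_X E ok /= inE.
Qed.
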